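(* (i) Let $n\in\{3,4\}$ and let $P\in\mathbb{C}[z]$ be a polynomial of degree $n$ whose set of critical values is exactly $\{0,1\}$. Then $P$ is extendedly equivalent either to the Chebycheff polynomial $\frac12(1+T_n(z))$ or to a Belyi polynomial $P_{m,r}$ with $m,r\ge1$, $m+r=n$. (iii) There exists a polynomial $P\in\mathbb{C}[z]$ of degree $6$ whose set of critical values is exactly $\{0,1\}$ such that $P$ is not extendedly equivalent to its complex conjugate $\bar P$; in particular $P$ is not extendedly equivalent to any polynomial in $\mathbb{R}[z]$.
   Context: Two polynomials $P,Q\in\mathbb{C}[z]$ are right affine equivalent if $Q(z)=P(az+b)$ for some $a\in\mathbb{C}^*$, $b\in\mathbb{C}$. For $P$ with set of critical values $\{0,1\}$, the polynomial $1-P$ also has critical values $\{0,1\}$; $P$ and $Q$ are called extendedly equivalent if $Q$ is right affine equivalent to $P$ or to $1-P$. $T_n$ denotes the Chebycheff polynomial, $T_n(\cos\theta)=\cos(n\theta)$. For positive integers $m,r$ the Belyi polynomial is $P_{m,r}(z)=z^m(1-z)^r(m+r)^{m+r}m^{-m}r^{-r}$. For $P(z)=\sum a_iz^i$, $\bar P(z)=\sum \bar a_i z^i$ (coefficientwise complex conjugation). Critical values are the values of $P$ at roots of $P'$. *)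

(* Defs.v *)
From mathcomp Require Import all_boot all_algebra.
From mathcomp Require Export complex.
From mathcomp Require Import Rstruct.
Set Implicit Arguments. Unset Strict Implicit. Unset Printing Implicit Defensive.
Import GRing.Theory Num.Theory.
Local Open Scope ring_scope.

Definition C : numClosedFieldType := (Rdefinitions.R)[i].

Definition critical_value (P : {poly C}) (w : C) : Prop :=
  exists z : C, root P^`() z /\ P.[z] = w.

Definition crit_vals_01 (P : {poly C}) : Prop :=
  forall w : C, critical_value P w <-> (w = 0 \/ w = 1).

Definition right_affine_equiv (P Q : {poly C}) : Prop :=
  exists (a b : C), a != 0 /\ Q = P \Po (a *: 'X + b%:P).

Definition ext_equiv (P Q : {poly C}) : Prop :=
  right_affine_equiv P Q \/ right_affine_equiv (1 - P) Q.

(* Chebyshev polynomials T_n (T_n(cos t) = cos(n t)), via the standard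
   recurrence T_0 = 1, T_1 = X, T_{n+2} = 2 X T_{n+1} - T_n. *)
Fixpoint cheb_aux (n : nat) : {poly C} * {poly C} :=
  match n with
  | 0%N => (1, 'X)
  | k.+1 => let: (a, b) := cheb_aux k in (b, 2%:P * 'X * b - a)
  end.
Definition cheb (n : nat) : {poly C} := (cheb_aux n).1.

Definition cheb_half (n : nat) : {poly C} := 2^-1 *: (1 + cheb n).

Definition belyi (m r : nat) : {poly C} :=
  (((m + r)%:R ^+ (m + r)) / ((m%:R ^+ m) * (r%:R ^+ r))) *:
    ('X ^+ m * (1 - 'X) ^+ r).

Definition conj_poly (P : {poly C}) : {poly C} := map_poly Num.conj P.

Definition real_poly (P : {poly C}) : Prop :=
  forall i : nat, complex.Im (P`_i : Rdefinitions.R[i]) = 0.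

(* Main.v *)
Require Import Defs.
From mathcomp Require Import all_boot all_algebra.
From mathcomp.algebra_tactics Require Import ring.
Import GRing.Theory Num.Theory.
Local Open Scope ring_scope.
Set Implicit Arguments. Unset Strict Implicit.

Lemma peval_eq (p q : {poly C}) : (forall x, p.[x] = q.[x]) -> p = q.
Proof.
move=> H; apply/eqP; rewrite -subr_eq0; apply/eqP.
set r := p - q.
have Hr : forall x, r.[x] = 0 by move=> x; rewrite /r hornerD hornerN H subrr.
apply/eqP/negPn/negP => nz.
have Hall : all (root r) [seq i%:R | i <- iota 0 (size r)].
  by apply/allP => x _; apply/rootP; apply: Hr.
have Hu : uniq [seq (i%:R : C) | i <- iota 0 (size r)].
  rewrite map_inj_uniq ?iota_uniq //.
  by move=> i j /eqP; rewrite eqr_nat => /eqP.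
have := max_poly_roots nz Hall Hu.
by rewrite size_map size_iota ltnn.
Qed.

Lemma deriv0_const (p : {poly C}) : p^`() = 0 -> p = (p`_0)%:P.
Proof.
move=> H; apply: size1_polyC.
rewrite leqNgt; apply/negP => hs.
have := congr1 (fun q : {poly C} => q`_(size p).-2) H.
rewrite coef_deriv coef0 => /eqP; rewrite mulrn_eq0 /=.
move=> h; suff : lead_coef p == 0.
  by rewrite lead_coef_eq0 => /eqP p0; move: hs; rewrite p0 size_poly0.
rewrite /lead_coef; have -> : (size p).-1 = (size p).-2.+1.
  by case: (size p) hs => [|[|n]].
exact: h.
Qed.

Lemma deriv_unique (P R : {poly C}) (u : C) :
  (forall x, P^`().[x] = R^`().[x]) -> P.[u] = R.[u] ->
  forall x, P.[x] = R.[x].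
Proof.
move=> Hd Hu x.
have : (P - R)^`() = 0.
  by apply: peval_eq => y; rewrite derivB hornerD hornerN Hd subrr horner0.
move/deriv0_const => E.
have : (P - R).[x] = (P - R).[u] by rewrite E !hornerC.
by rewrite !hornerD !hornerN Hu subrr => /eqP; rewrite subr_eq0 => /eqP.
Qed.

Lemma horner1C (x : C) : (1 : {poly C}).[x] = 1.
Proof. by rewrite -polyC1 hornerC. Qed.

Definition hE := (hornerD, hornerN, hornerX, hornerC, hornerZ, hornerM,
  horner_exp, hornerMn, horner1C).

Ltac fld := field; rewrite ?pnatr_eq0 ?andbT ?andTb //; repeat (apply/andP; split); rewrite ?pnatr_eq0 //.

Lemma L3 (P : {poly C}) (l u v : C) : l != 0 ->
  (forall x, P^`().[x] = l * ((x - u) * (x - v))) -> P.[u] = 0 -> P.[v] = 1 ->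
  right_affine_equiv P (belyi 2 1).
Proof.
move=> l0 HP Pu Pv.
have uv : v - u != 0.
  apply/negP; rewrite subr_eq0 => /eqP e.
  by move: Pv; rewrite e Pu => /eqP; rewrite eq_sym oner_eq0.
set w := (3 * v - u) / 2.
set R : {poly C} := (l / 3) *: (('X - u%:P) * ('X - u%:P) * ('X - w%:P)).
have HR : forall x, P.[x] = R.[x].
  apply: (@deriv_unique _ _ u).
    move=> x; rewrite HP /R !derivE !hE /w. fld.
  by rewrite Pu /R !hE subrr !mul0r mulr0.
have e1 : l * (v - u)^+3 = -6 * R.[v] by rewrite /R !hE /w; fld.
rewrite -HR Pv mulr1 in e1.
have rel : l = -6 / (v - u)^+3 by rewrite -e1; fld.
exists (3 * (v - u) / 2), u; split.
  by rewrite !mulf_neq0 ?invr_eq0 ?pnatr_eq0.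
apply: peval_eq => x.
rewrite horner_comp HR /R /belyi !hE rel /w. fld.
Qed.

Lemma L4 (P : {poly C}) (l u v w : C) : l != 0 ->
  (forall x, P^`().[x] = l * ((x - u) * (x - v) * (x - w))) ->
  P.[u] = 0 -> P.[v] = 0 -> P.[w] = 1 ->
  right_affine_equiv P (belyi 3 1) \/ right_affine_equiv P (belyi 2 2).
Proof.
move=> l0 HP Pu Pv Pw.
have uw : w - u != 0.
  apply/negP; rewrite subr_eq0 => /eqP e.
  by move: Pw; rewrite e Pu => /eqP; rewrite eq_sym oner_eq0.
case: (eqVneq u v) => [e|uv].
  subst v.
  left.
  set w' := (4 * w - u) / 3.
  set R : {poly C} := (l / 4) *:
    (('X - u%:P) * ('X - u%:P) * ('X - u%:P) * ('X - w'%:P)).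
  have HR : forall x, P.[x] = R.[x].
    apply: (@deriv_unique _ _ u).
      by move=> x; rewrite HP /R !derivE !hE /w'; fld.
    by rewrite Pu /R !hE subrr !mul0r mulr0.
  have e1 : l * (w - u)^+4 = -12 * R.[w] by rewrite /R !hE /w'; fld.
  rewrite -HR Pw mulr1 in e1.
  have rel : l = -12 / (w - u)^+4 by rewrite -e1; fld.
  exists (4 * (w - u) / 3), u; split.
    by rewrite !mulf_neq0 ?invr_eq0 ?pnatr_eq0.
  apply: peval_eq => x.
  by rewrite horner_comp HR /R /belyi !hE rel /w'; fld.
right.
have vu : v - u != 0 by rewrite subr_eq0 eq_sym.
set F : {poly C} := (l / 4) *: ('X * 'X * 'X * 'X)
  - (l * (u + v + w) / 3) *: ('X * 'X * 'X)
  + (l * (u * v + u * w + v * w) / 2) *: ('X * 'X)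
  - (l * u * v * w) *: 'X.
set R : {poly C} := F - (F.[u])%:P.
have HR : forall x, P.[x] = R.[x].
  apply: (@deriv_unique _ _ u).
    by move=> x; rewrite HP /R /F !derivE !hE; fld.
  by rewrite Pu /R !hE subrr.
have e : u + v - 2 * w = -12 * (R.[v] - R.[u]) / (l * (v - u)^+3).
  by rewrite /R /F !hE; fld.
rewrite -!HR Pu Pv subrr mulr0 mul0r in e.
have hw : w = ((u + v) - (u + v - 2 * w)) / 2 by fld.
rewrite e subr0 in hw.
set R2 : {poly C} := (l / 4) *:
    (('X - u%:P) * ('X - u%:P) * ('X - v%:P) * ('X - v%:P)).
have HR2 : forall x, P.[x] = R2.[x].
  apply: (@deriv_unique _ _ u).
    by move=> x; rewrite HP /R2 !derivE !hE hw; fld.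
  by rewrite Pu /R2 !hE subrr !mul0r mulr0.
have e1 : l * (v - u)^+4 = 64 * R2.[w] by rewrite /R2 !hE hw; fld.
rewrite -HR2 Pw mulr1 in e1.
have rel : l = 64 / (v - u)^+4 by rewrite -e1; fld.
exists (v - u), u; split => //.
apply: peval_eq => x.
by rewrite horner_comp HR2 /R2 /belyi !hE rel; fld.
Qed.

Lemma crit_root (P : {poly C}) z : P^`().[z] = 0 -> P.[z] = 0 \/ P.[z] = 1 ->
  critical_value P P.[z].
Proof. by move=> h _; exists z; split => //; apply/rootP. Qed.

Lemma one_neq0 (P : {poly C}) z : P.[z] = 0 -> P.[z] = 1 -> False.
Proof. by move=> -> /eqP; rewrite eq_sym oner_eq0. Qed.

Lemma part3 (P : {poly C}) l z1 z2 : l != 0 ->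
  (forall x, P^`().[x] = l * ((x - z1) * (x - z2))) -> crit_vals_01 P ->
  right_affine_equiv P (belyi 2 1).
Proof.
move=> l0 HP H.
have rt : forall z, root P^`() z -> z = z1 \/ z = z2.
  move=> z /rootP; rewrite HP => /eqP; rewrite !mulf_eq0 (negbTE l0) /= !subr_eq0.
  by case/orP => /eqP ->; [left|right].
have [z [/rt hz Pz]] := (proj2 (H 0)) (or_introl erefl).
have [z' [/rt hz' Pz']] := (proj2 (H 1)) (or_intror erefl).
move: Pz Pz'; case: hz => ->; case: hz' => -> Pz Pz';
  try by case: (one_neq0 Pz Pz').
  all: apply: (L3 l0 _ Pz Pz') => x; rewrite HP; ring.
Qed.

Lemma H4 (P : {poly C}) l a b c : l != 0 ->
  (forall x, P^`().[x] = l * ((x - a) * (x - b) * (x - c))) ->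
  P.[a] = 0 -> P.[b] = 1 -> P.[c] = 0 \/ P.[c] = 1 ->
  exists m r : nat, (1 <= m)%N /\ (1 <= r)%N /\ (m + r)%N = 4%N /\
                    ext_equiv P (belyi m r).
Proof.
move=> l0 HP Pa Pb [] Pc.
  have hp : forall x, P^`().[x] = l * ((x - a) * (x - c) * (x - b)).
    by move=> x; rewrite HP; ring.
  case: (L4 l0 hp Pa Pc Pb) => h.
  - by exists 3%N, 1%N; do !split => //; left.
  - by exists 2%N, 2%N; do !split => //; left.
have hd : forall x, (1 - P)^`().[x] = - l * ((x - b) * (x - c) * (x - a)).
  by move=> x; rewrite derivB -polyC1 derivC sub0r hornerN HP; ring.
have e : forall y, P.[y] = 1 -> (1 - P).[y] = 0.
  by move=> y h; rewrite hornerD hornerN horner1C h subrr.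
have e' : (1 - P).[a] = 1 by rewrite hornerD hornerN horner1C Pa subr0.
have l1 : - l != 0 by rewrite oppr_eq0.
case: (L4 l1 hd (e _ Pb) (e _ Pc) e') => h.
- by exists 3%N, 1%N; do !split => //; right.
- by exists 2%N, 2%N; do !split => //; right.
Qed.

Lemma part4 (P : {poly C}) l z1 z2 z3 : l != 0 ->
  (forall x, P^`().[x] = l * ((x - z1) * ((x - z2) * (x - z3)))) ->
  crit_vals_01 P ->
  exists m r : nat, (1 <= m)%N /\ (1 <= r)%N /\ (m + r)%N = 4%N /\
                    ext_equiv P (belyi m r).
Proof.
move=> l0 HP H.
have rt : forall z, root P^`() z -> [\/ z = z1, z = z2 | z = z3].
  move=> z /rootP; rewrite HP => /eqP; rewrite !mulf_eq0 (negbTE l0) /= !subr_eq0.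
  by case/orP => [/eqP ->|/orP [] /eqP ->]; [constructor 1|constructor 2|constructor 3].
have V : forall z, root P^`() z -> P.[z] = 0 \/ P.[z] = 1.
  by move=> z hz; apply/(H P.[z]); exists z.
have V1 : P.[z1] = 0 \/ P.[z1] = 1 by apply: V; apply/rootP; rewrite HP subrr ?mul0r ?mulr0 ?mul0r ?mulr0.
have V2 : P.[z2] = 0 \/ P.[z2] = 1 by apply: V; apply/rootP; rewrite HP subrr ?mul0r ?mulr0 ?mul0r ?mulr0.
have V3 : P.[z3] = 0 \/ P.[z3] = 1 by apply: V; apply/rootP; rewrite HP subrr ?mul0r ?mulr0 ?mul0r ?mulr0.
have [z [/rt hz Pz]] := (proj2 (H 0)) (or_introl erefl).
have [z' [/rt hz' Pz']] := (proj2 (H 1)) (or_intror erefl).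
move: Pz Pz'; case: hz => ->; case: hz' => -> Pz Pz';
  try by case: (one_neq0 Pz Pz').
all: first
  [ (apply: (H4 l0 _ Pz Pz' V1); move=> x; rewrite HP; ring)
  | (apply: (H4 l0 _ Pz Pz' V2); move=> x; rewrite HP; ring)
  | (apply: (H4 l0 _ Pz Pz' V3); move=> x; rewrite HP; ring) ].
Qed.

Lemma partI (n : nat) (P : {poly C}) :
  (n = 3%N \/ n = 4%N) -> size P = n.+1 -> crit_vals_01 P ->
  exists m r : nat, (1 <= m)%N /\ (1 <= r)%N /\ (m + r)%N = n /\
                    ext_equiv P (belyi m r).
Proof.
move=> hn hs H.
have P0 : P != 0 by rewrite -size_poly_eq0 hs.
have hlt : (size P^`() < n.+1)%N by rewrite -hs lt_size_deriv.
have hc : P^`()`_n.-1 != 0.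
  rewrite coef_deriv mulrn_eq0 negb_or.
  have -> : n.-1.+1 = n by case: hn => ->.
  have : lead_coef P != 0 by rewrite lead_coef_eq0.
  by rewrite lead_coefE hs /= => ->; case: hn => ->.
have hsz : size P^`() = n.
  apply/eqP; rewrite eqn_leq -ltnS hlt /=.
  rewrite leqNgt; apply/negP => h; move: hc; rewrite nth_default //.
    by rewrite eqxx.
  by case: hn h => -> .
have D0 : P^`() != 0 by rewrite -size_poly_eq0 hsz; case: hn => ->.
have [s Hs] := closed_field_poly_normal P^`().
set l := lead_coef P^`() in Hs.
have l0 : l != 0 by rewrite lead_coef_eq0.
have ss : size s = n.-1.
  by move: hsz; rewrite Hs size_scale // size_prod_XsubC => <-.
have HP : forall x, P^`().[x] = l * \prod_(z <- s) (x - z).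
  by move=> x; rewrite {1}Hs hornerZ horner_prod; congr (_ * _);
     apply: eq_bigr => z _; rewrite hornerD hornerN hornerX hornerC.
case: hn => hn; rewrite hn /= in ss *.
  case: s ss HP {Hs} => [|z1 [|z2 [|z3 s]]] //= _ HP.
  exists 2%N, 1%N; do !split => //; left.
  by apply: (part3 l0 _ H) => x; rewrite HP !big_cons big_nil mulr1.
case: s ss HP {Hs} => [|z1 [|z2 [|z3 [|z4 s]]]] //= _ HP.
by apply: (part4 l0 _ H) => x; rewrite HP !big_cons big_nil mulr1.
Qed.

Lemma compA_eval (p : {poly C}) a b z :
  (p \Po (a *: 'X + b%:P)).[z] = p.[a * z + b].
Proof. by rewrite horner_comp !hE. Qed.

Lemma compA_deriv (p : {poly C}) a b :
  (p \Po (a *: 'X + b%:P))^`() = (p^`() \Po (a *: 'X + b%:P)) * a%:P.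
Proof.
rewrite deriv_comp; congr (_ * _).
by apply: peval_eq => x; rewrite !derivE !hE; ring.
Qed.

Lemma conj_eval (p : {poly C}) x :
  (conj_poly p).[Num.conj x] = Num.conj p.[x].
Proof. by rewrite /conj_poly horner_map. Qed.

Lemma conj_eval0 (p : {poly C}) : p.[0] = 0 -> (conj_poly p).[0] = 0.
Proof. by move=> h; rewrite -[X in _.[X]](rmorph0 Num.conj) conj_eval h rmorph0. Qed.

Lemma conj_deriv (p : {poly C}) : (conj_poly p)^`() = conj_poly p^`().
Proof. by rewrite /conj_poly deriv_map. Qed.

Lemma conjR (x : C) : complex.Im x = 0 -> Num.conj x = x.
Proof. by case: x => a b /= ->; rewrite /Num.conj /= oppr0. Qed.

Lemma conj_poly_comp (p : {poly C}) a b :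
  conj_poly (p \Po (a *: 'X + b%:P)) =
  conj_poly p \Po (Num.conj a *: 'X + (Num.conj b)%:P).
Proof.
by rewrite /conj_poly map_comp_poly rmorphD /= map_polyZ map_polyX map_polyC.
Qed.

Lemma key (p q : {poly C}) a b : a != 0 -> conj_poly q = q ->
  q = p \Po (a *: 'X + b%:P) ->
  conj_poly p = p \Po ((a / Num.conj a) *: 'X
                       + (a * (- Num.conj b / Num.conj a) + b)%:P).
Proof.
move=> a0 Hq E.
have ca : Num.conj a != 0 by rewrite conjC_eq0.
have h1 : forall y, (conj_poly p).[Num.conj a * y + Num.conj b] = p.[a * y + b].
  move=> y; have := congr1 (fun r : {poly C} => r.[y]) Hq.
  by rewrite {1}E conj_poly_comp !compA_eval E compA_eval.
apply: peval_eq => x; rewrite compA_eval.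
have -> : x = Num.conj a * ((x - Num.conj b) / Num.conj a) + Num.conj b by fld.
rewrite h1; congr (p.[_]); fld.
Qed.

Lemma rae_conj (P Q : {poly C}) : conj_poly Q = Q -> ext_equiv P Q ->
  right_affine_equiv P (conj_poly P).
Proof.
move=> Hq [[a [b [a0 E]]]|[a [b [a0 E]]]].
  have := key a0 Hq E => ->.
  by eexists; eexists; split; last reflexivity; rewrite mulf_neq0 ?invr_eq0 ?conjC_eq0.
have := key a0 Hq E.
set A := (_ *: 'X + _) => h.
exists (a / Num.conj a), (a * (- Num.conj b / Num.conj a) + b); split.
  by rewrite mulf_neq0 ?invr_eq0 ?conjC_eq0.
apply: peval_eq => x; rewrite compA_eval.
have := congr1 (fun r : {poly C} => r.[x]) h.
rewrite /conj_poly rmorphB rmorph1 /= -/(conj_poly P) compA_eval !hE.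
move=> e; have : 1 - (conj_poly P).[x] = 1 - P.[a / Num.conj a * x + (a * (- Num.conj b / Num.conj a) + b)] by [].
by move/(congr1 (fun t => 1 - t)); rewrite !opprB !addrA !(addrC 1) !addrK.
Qed.

Definition I6 : C := 'i.
Definition b6 : C := (16 + 12 * I6) / 25.
Definition p6 : C := (3 + I6) / 5.
Definition K6 : C := p6 ^+ 3 * (p6 - 1) ^+ 2 * (p6 - b6).
Definition c6 : C := K6^-1.
Definition P6 : {poly C} :=
  c6 *: ('X * 'X * 'X * ('X - 1%:P) * ('X - 1%:P) * ('X - b6%:P)).

Lemma I2 : I6 ^+ 2 = -1. Proof. exact: sqrCi. Qed.

Lemma nz_of (x y k : C) : x * y = k -> k != 0 -> x != 0.
Proof. by move=> <-; apply: contra => /eqP ->; rewrite mul0r. Qed.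

Lemma p6_nz : p6 != 0.
Proof. by apply: (@nz_of _ (3 - I6) 2); rewrite ?pnatr_eq0 // /p6; field: I2. Qed.

Lemma p6_1 : p6 - 1 != 0.
Proof. by apply: (@nz_of _ (-2 - I6) 1); rewrite ?oner_eq0 // /p6; field: I2. Qed.
Lemma p6_b6 : p6 - b6 != 0.
Proof. by apply: (@nz_of _ (-1 + 7 * I6) 2); rewrite ?pnatr_eq0 // /p6 /b6; field: I2. Qed.
Lemma b6_nz : b6 != 0.
Proof. by apply: (@nz_of _ (16 - 12 * I6) 16); rewrite ?pnatr_eq0 // /b6; field: I2. Qed.
Lemma b6_1 : b6 - 1 != 0.
Proof. by apply: (@nz_of _ (-9 - 12 * I6) 9); rewrite ?pnatr_eq0 // /b6; field: I2. Qed.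
Lemma b6_p6 : b6 - p6 != 0.
Proof. by rewrite -opprB oppr_eq0 p6_b6. Qed.
Lemma K6_nz : K6 != 0.
Proof.
rewrite /K6; apply: mulf_neq0; last exact: p6_b6.
by apply: mulf_neq0; apply: expf_neq0; [exact: p6_nz | exact: p6_1].
Qed.
Lemma c6_nz : c6 != 0.
Proof. by rewrite /c6 invr_eq0 K6_nz. Qed.

Lemma conj_b6 : Num.conj b6 = (16 - 12 * I6) / 25.
Proof.
rewrite /b6 /I6 fmorph_div rmorphD rmorphM !rmorph_nat /= conjCi.
by rewrite mulrN.
Qed.
Lemma cb6_b6 : Num.conj b6 - b6 != 0.
Proof.
rewrite conj_b6; apply: (@nz_of _ I6 (24/25)).
  by rewrite /b6; field: I2.
by rewrite mulf_neq0 ?invr_eq0 ?pnatr_eq0.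
Qed.
Lemma cb6_nz : Num.conj b6 != 0.
Proof. by rewrite conjC_eq0 b6_nz. Qed.
Lemma cb6_1 : Num.conj b6 - 1 != 0.
Proof.
rewrite conj_b6; apply: (@nz_of _ (-9 + 12 * I6) 9); rewrite ?pnatr_eq0 //.
by field: I2.
Qed.

Lemma P6_eval x : P6.[x] = c6 * (x * x * x * (x - 1) * (x - 1) * (x - b6)).
Proof. by rewrite /P6 !hE. Qed.


Lemma b6_p : b6 = (12 * p6 - 4) / 5.
Proof. by rewrite /b6 /p6; field. Qed.

Lemma p6_sq : p6 ^+ 2 = (6 * p6 - 2) / 5.
Proof. by rewrite /p6; field: I2. Qed.

Lemma P6_deriv x :
  P6^`().[x] = 6 * c6 * (x * x * (x - 1) * (x - p6) * (x - p6)).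
Proof.
have h : forall y, 6 * c6 * (y * y * (y - 1) * (y - p6) * (y - p6)) =
  6 * c6 * (y * y * (y - 1) * (y * y - 2 * p6 * y + (6 * p6 - 2) / 5)).
  by move=> y; rewrite -p6_sq; ring.
by rewrite h /P6 !derivE !hE b6_p; fld.
Qed.

Lemma P6_d : P6^`() =
  (6 * c6) *: ('X * 'X * ('X - 1%:P) * ('X - p6%:P) * ('X - p6%:P)).
Proof. by apply: peval_eq => x; rewrite P6_deriv !hE. Qed.

Lemma P6_dd1 : P6^`()^`().[1] = 6 * c6 * ((1 - p6) * (1 - p6)).
Proof. by rewrite P6_d !derivE !hE; ring. Qed.

Lemma P6_dd0 : P6^`()^`().[0] = 0.
Proof. by rewrite P6_d !derivE !hE; ring. Qed.

Lemma P6_p6 : P6.[p6] = 1.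
Proof.
rewrite P6_eval; have -> : p6 * p6 * p6 * (p6 - 1) * (p6 - 1) * (p6 - b6) = K6.
  by rewrite /K6; ring.
by rewrite /c6 mulVf // K6_nz.
Qed.

Lemma P6_0 : P6.[0] = 0. Proof. by rewrite P6_eval !mul0r mulr0. Qed.
Lemma P6_1 : P6.[1] = 0. Proof. by rewrite P6_eval subrr !mulr0 !mul0r mulr0. Qed.


Lemma one_p6 : 1 - p6 != 0.
Proof. by rewrite -opprB oppr_eq0 p6_1. Qed.

Lemma P6_root x : P6.[x] = 0 -> [\/ x = 0, x = 1 | x = b6].
Proof.
rewrite P6_eval => /eqP; rewrite mulf_eq0 (negbTE c6_nz) /= !mulf_eq0 !subr_eq0 => H.
case: (eqVneq x 0) => [->|x0]; first by constructor 1.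
case: (eqVneq x 1) => [->|x1]; first by constructor 2.
case: (eqVneq x b6) => [->|xb]; first by constructor 3.
by move: H; rewrite (negbTE x0) (negbTE x1) (negbTE xb).
Qed.

Lemma P6'_root x : P6^`().[x] = 0 -> [\/ x = 0, x = 1 | x = p6].
Proof.
have c0 : 6 * c6 != 0 by rewrite mulf_neq0 ?pnatr_eq0 ?c6_nz.
rewrite P6_deriv => /eqP; rewrite mulf_eq0 (negbTE c0) /= !mulf_eq0 !subr_eq0 => H.
case: (eqVneq x 0) => [->|x0]; first by constructor 1.
case: (eqVneq x 1) => [->|x1]; first by constructor 2.
case: (eqVneq x p6) => [->|xb]; first by constructor 3.
by move: H; rewrite (negbTE x0) (negbTE x1) (negbTE xb).
Qed.

Lemma size_P6 : size P6 = 7%N.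
Proof.
rewrite /P6 size_scale ?c6_nz //.
have -> : 'X * 'X * 'X * ('X - 1%:P) * ('X - 1%:P) * ('X - b6%:P) =
  \prod_(z <- [:: 0; 0; 0; 1; 1; b6]) ('X - z%:P).
  by rewrite !big_cons big_nil polyC0 subr0 mulr1 !mulrA.
by rewrite size_prod_XsubC.
Qed.

Lemma crit_P6 : crit_vals_01 P6.
Proof.
move=> w; split.
  case=> z [/rootP hz <-].
  by case: (P6'_root hz) => ->; [left; exact: P6_0|left; exact: P6_1|right; exact: P6_p6].
case=> ->.
  exists 0; split; last exact: P6_0.
  by apply/rootP; rewrite P6_deriv; ring.
exists p6; split; last exact: P6_p6.
by apply/rootP; rewrite P6_deriv; ring.
Qed.

Lemma P6'b : P6^`().[b6] != 0.
Proof.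
rewrite P6_deriv; apply: mulf_neq0; first by rewrite mulf_neq0 ?pnatr_eq0 ?c6_nz.
apply: mulf_neq0; last exact: b6_p6.
apply: mulf_neq0; last exact: b6_p6.
apply: mulf_neq0; last exact: b6_1.
by apply: mulf_neq0; exact: b6_nz.
Qed.

Lemma P6''1 : P6^`()^`().[1] != 0.
Proof.
rewrite P6_dd1; apply: mulf_neq0; first by rewrite mulf_neq0 ?pnatr_eq0 ?c6_nz.
by apply: mulf_neq0; exact: one_p6.
Qed.

Lemma d1m : (1 - P6)^`() = - P6^`().
Proof. by rewrite derivB -polyC1 derivC sub0r. Qed.

Lemma val1 y : P6.[y] = 1 -> P6^`().[y] = 0 -> y = p6.
Proof.
move=> h1 /P6'_root [] e //; rewrite e in h1.
  by move: h1; rewrite P6_0 => /eqP; rewrite eq_sym oner_eq0.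
by move: h1; rewrite P6_1 => /eqP; rewrite eq_sym oner_eq0.
Qed.

Lemma not_ext : ~ ext_equiv P6 (conj_poly P6).
Proof.
set Q := conj_poly P6.
have c1 : Num.conj (1 : C) = 1 by rewrite rmorph1.
have Q0 : Q.[0] = 0 by apply: conj_eval0; exact: P6_0.
have Q1 : Q.[1] = 0.
  by rewrite -[X in _.[X]]c1 /Q conj_eval P6_1 rmorph0.
have d0 : P6^`().[0] = 0 by rewrite P6_deriv; ring.
have d1 : P6^`().[1] = 0 by rewrite P6_deriv; ring.
have Q'0 : Q^`().[0] = 0 by rewrite /Q conj_deriv; apply: conj_eval0.
have Q'1 : Q^`().[1] = 0.
  by rewrite /Q conj_deriv -[X in _.[X]]c1 conj_eval d1 rmorph0.
have Q''0 : Q^`()^`().[0] = 0.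
  by rewrite /Q !conj_deriv; apply: conj_eval0; exact: P6_dd0.
have hb : P6.[b6] = 0 by rewrite P6_eval subrr !mulr0.
have Qb : Q.[Num.conj b6] = 0 by rewrite /Q conj_eval hb rmorph0.
case=> [[a [bb [a0 E]]] | [a [bb [a0 E]]]].
  have e0 : P6.[bb] = 0 by move: Q0; rewrite E compA_eval mulr0 add0r.
  have e1 : P6.[a + bb] = 0 by move: Q1; rewrite E compA_eval mulr1.
  have e0' : P6^`().[bb] = 0.
    move: Q'0; rewrite E compA_deriv hornerM compA_eval hornerC mulr0 add0r.
    by move/eqP; rewrite mulf_eq0 (negbTE a0) orbF => /eqP.
  have e1' : P6^`().[a + bb] = 0.
    move: Q'1; rewrite E compA_deriv hornerM compA_eval hornerC mulr1.
    by move/eqP; rewrite mulf_eq0 (negbTE a0) orbF => /eqP.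
  have e0'' : P6^`()^`().[bb] = 0.
    move: Q''0; rewrite E compA_deriv derivM derivC mulr0 addr0 compA_deriv.
    rewrite !hornerM compA_eval !hornerC mulr0 add0r.
    by move/eqP; rewrite !mulf_eq0 (negbTE a0) !orbF => /eqP.
  have bb0 : bb = 0.
    case: (P6_root e0) => // e.
      by move: P6''1; rewrite -e e0'' eqxx.
    by move: P6'b; rewrite -e e0' eqxx.
  rewrite bb0 addr0 in e1 e1' E.
  have a1 : a = 1.
    case: (P6_root e1) => // e.
      by move: a0; rewrite e eqxx.
    by move: P6'b; rewrite -e e1' eqxx.
  move: Qb; rewrite E a1 compA_eval mul1r addr0 => /P6_root [] e.
  - by move: cb6_nz; rewrite e eqxx.
  - by move: cb6_1; rewrite e subrr eqxx.
  - by move: cb6_b6; rewrite e subrr eqxx.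
have ev : forall z, Q.[z] = 1 - P6.[a * z + bb].
  by move=> z; rewrite E compA_eval hornerD hornerN horner1C.
have dv : forall z, Q^`().[z] = - P6^`().[a * z + bb] * a.
  by move=> z; rewrite E compA_deriv d1m hornerM compA_eval hornerN hornerC.
have f1 : forall z, Q.[z] = 0 -> P6.[a * z + bb] = 1.
  by move=> z; rewrite ev => /eqP; rewrite subr_eq0 => /eqP <-.
have f2 : forall z, Q^`().[z] = 0 -> P6^`().[a * z + bb] = 0.
  move=> z; rewrite dv => /eqP; rewrite mulf_eq0 (negbTE a0) orbF oppr_eq0.
  by move/eqP.
have h0 := val1 (f1 _ Q0) (f2 _ Q'0).
have h1 := val1 (f1 _ Q1) (f2 _ Q'1).
move: h1; rewrite mulr0 add0r in h0; rewrite mulr1 -h0 => /eqP.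
by rewrite -subr_eq0 addrK (negbTE a0).
Qed.

Theorem mainTheorem3 :
  (* (i) *)
  (forall (n : nat) (P : {poly C}),
      (n = 3%N \/ n = 4%N) -> size P = n.+1 -> crit_vals_01 P ->
      ext_equiv P (cheb_half n) \/
      (exists m r : nat, (1 <= m)%N /\ (1 <= r)%N /\ (m + r)%N = n /\
                         ext_equiv P (belyi m r))) /\
  (* (iii) *)
  (exists P : {poly C},
      size P = 7%N /\ crit_vals_01 P /\
      ~ ext_equiv P (conj_poly P) /\
      (forall Q : {poly C}, real_poly Q -> ~ ext_equiv P Q)).
Proof.
split.
  by move=> n P hn hs H; right; exact: partI hn hs H.
exists P6; split; first exact: size_P6.
split; first exact: crit_P6.
split; first exact: not_ext.
move=> Q hQ hE; apply: not_ext; left; apply: (rae_conj _ hE).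
by apply/polyP => i; rewrite /conj_poly coef_map /=; apply: conjR; apply: hQ.
Qed.
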